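(* Consider an instance of the bicriteria asymmetric traveling salesman problem (bi-ATSP) with tour set $\mathcal{C}$, vector criterion $D=(D_1,D_2)$, outcome set $\mathcal{D}=D(\mathcal{C})$, and $\mathcal{D}_i=D_i(\mathcal{C})$ for $i=1,2$. Suppose that $$P(\mathcal{D}) = \{ (y_1, y_2): y_2 = a - k y_1,\ y_1 \in \mathcal{D}_1,\ y_2 \in \mathcal{D}_2 \},$$ where $a>0$ and $k>0$ are constants. Suppose the 2nd criterion $D_2$ is more important than the 1st criterion $D_1$ with coefficient of relative importance $\theta''\in(0,1)$, and let $\hat{P}(\mathcal{D})$ be the corresponding reduced Pareto set (reduction with $i=2$, $j=1$, $\theta=\theta''$). If $\theta'' \geqslant 1/(k+1)$, then $\hat{P}(\mathcal{D})$ consists of exactly one element. If $\theta'' < 1/(k+1)$, then $\hat{P}(\mathcal{D}) = P(\mathcal{D})$.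
   Context: Bi-ATSP: given a complete directed graph $G=(V,E)$ on $n$ vertices, each arc $e\in E$ carries a weight vector $d(e)=(d_1(e),d_2(e))$ of positive numbers. $\mathcal{C}$ is the set of all $(n-1)!$ Hamiltonian circuits (tours) of $G$, and for a tour $C$, $D(C)=(D_1(C),D_2(C))$ with $D_j(C)=\sum_{e\in C} d_j(e)$. For vectors $y^*,y$, write $y^*\leq y$ if $y^*\neq y$ and $y^*_s\leqslant y_s$ for every coordinate $s$ (Pareto relation). For a vector criterion $F$ on $\mathcal{C}$, the set of pareto-optimal tours is $P_F(\mathcal{C})=\{C\in\mathcal{C}: \nexists C^*\in\mathcal{C},\ F(C^* )\leq F(C)\}$. The Pareto set is $P(\mathcal{D})=\{y\in\mathcal{D}: \nexists y^*\in\mathcal{D},\ y^*\leq y\}$. Reduced Pareto set: if criterion $D_i$ is declared more important than criterion $D_j$ ($\{i,j\}=\{1,2\}$) with coefficient of relative importance $\theta\in(0,1)$, define the new criterion $\hat D$ by $\hat D_j=\theta D_i+(1-\theta)D_j$ and $\hat D_i=D_i$, and set $\hat{P}(\mathcal{D})=D(P_{\hat D}(\mathcal{C}))$ (a subset of $P(\mathcal{D})$). *)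

(* Defs.v *)
From HB Require Import structures.
From mathcomp Require Import all_boot all_order all_algebra all_fingroup.
Set Implicit Arguments. Unset Strict Implicit. Unset Printing Implicit Defensive.
Import Order.TTheory GRing.Theory Num.Theory.
Local Open Scope ring_scope.

(* A Hamiltonian circuit (tour) is encoded by its successor permutation
   s : {perm 'I_n} which is a single n-cycle (the orbit of every vertex is
   the whole vertex set); its arcs are (i, s i), i : 'I_n. *)
Definition is_tour (n : nat) (s : {perm 'I_n}) : Prop :=
  forall x : 'I_n, porbit s x = [set: 'I_n].

Definition tour_weight (R : realFieldType) (n : nat)
  (dj : 'I_n -> 'I_n -> R) (s : {perm 'I_n}) : R :=
  \sum_(i < n) dj i (s i).

Definition Dvec (R : realFieldType) (n : nat) (d1 d2 : 'I_n -> 'I_n -> R)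
  (s : {perm 'I_n}) : R * R :=
  (tour_weight d1 s, tour_weight d2 s).

Definition pareto_le (R : realFieldType) (ys y : R * R) : Prop :=
  ys <> y /\ ys.1 <= y.1 /\ ys.2 <= y.2.

Definition outcomes (R : realFieldType) (n : nat) (d1 d2 : 'I_n -> 'I_n -> R)
  (y : R * R) : Prop :=
  exists s : {perm 'I_n}, is_tour s /\ Dvec d1 d2 s = y.

Definition outcomes1 (R : realFieldType) (n : nat) (d1 d2 : 'I_n -> 'I_n -> R)
  (t : R) : Prop := exists s : {perm 'I_n}, is_tour s /\ tour_weight d1 s = t.
Definition outcomes2 (R : realFieldType) (n : nat) (d1 d2 : 'I_n -> 'I_n -> R)
  (t : R) : Prop := exists s : {perm 'I_n}, is_tour s /\ tour_weight d2 s = t.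

Definition pareto_set (R : realFieldType) (n : nat) (d1 d2 : 'I_n -> 'I_n -> R)
  (y : R * R) : Prop :=
  outcomes d1 d2 y /\ ~ (exists ys, outcomes d1 d2 ys /\ pareto_le ys y).

Definition pareto_tours (R : realFieldType) (n : nat)
  (F : {perm 'I_n} -> R * R) (s : {perm 'I_n}) : Prop :=
  is_tour s /\ ~ (exists s', is_tour s' /\ pareto_le (F s') (F s)).

Definition Dhat21 (R : realFieldType) (n : nat) (d1 d2 : 'I_n -> 'I_n -> R)
  (theta : R) (s : {perm 'I_n}) : R * R :=
  (theta * tour_weight d2 s + (1 - theta) * tour_weight d1 s, tour_weight d2 s).

Definition reduced_pareto21 (R : realFieldType) (n : nat)
  (d1 d2 : 'I_n -> 'I_n -> R) (theta : R) (y : R * R) : Prop :=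
  exists s : {perm 'I_n}, pareto_tours (Dhat21 d1 d2 theta) s /\ Dvec d1 d2 s = y.

(* Main.v *)
Require Import Defs.
From HB Require Import structures.
From mathcomp Require Import all_boot all_order all_algebra all_fingroup.
From mathcomp Require Import lra.
Import Order.TTheory GRing.Theory Num.Theory.
Local Open Scope ring_scope.

Lemma argmin_ex (R : realFieldType) (T : finType) (P : pred T) (f : T -> R) (i0 : T) :
  P i0 -> exists2 i, P i & forall j, P j -> f i <= f j.
Proof.
move=> Pi0; case: (arg_minP f Pi0) => i Pi Hi; exists i => // j Pj; exact: Hi.
Qed.

Definition is_tourb {n} (s : {perm 'I_n}) := [forall x, porbit s x == setT].
Lemma is_tourP n (s : {perm 'I_n}) : is_tour s <-> is_tourb s.
Proof.
split=> [H|/forallP H x]; first by apply/forallP => x; rewrite H.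
exact/eqP.
Qed.

Lemma pareto_below (R : realFieldType) n (d1 d2 : 'I_n -> 'I_n -> R) s :
  is_tour s -> exists s2, is_tour s2 /\ pareto_set d1 d2 (Dvec d1 d2 s2) /\
     tour_weight d1 s2 <= tour_weight d1 s /\ tour_weight d2 s2 <= tour_weight d2 s.
Proof.
move=> ts.
pose P := [pred t : {perm 'I_n} | is_tourb t && (tour_weight d1 t <= tour_weight d1 s)
           && (tour_weight d2 t <= tour_weight d2 s)].
have Ps : P s by rewrite /= lexx lexx !andbT; exact: (proj1 (is_tourP _ _) ts).
have [t /andP[/andP[tt h1] h2] Ht] :=
  @argmin_ex _ _ _ (fun t => tour_weight d1 t + tour_weight d2 t) _ Ps.
have {}tt := proj2 (is_tourP _ t) tt.
exists t; split=> //; split=> //; split; first by exists t.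
case=> ys [[u [tu <-]] [ne [l1 l2]]].
have Pu : P u.
  rewrite /= (le_trans l1 h1) (le_trans l2 h2) !andbT; exact: (proj1 (is_tourP _ _) tu).
have := Ht u Pu; rewrite /Dvec /= in ne l1 l2 => H.
apply: ne; congr pair; apply/eqP; rewrite eq_le ?l1 ?l2 /=; lra.
Qed.
Lemma iter_ordS (n : nat) (x : 'I_n) m : val (iter m (@ordS n) x) = ((x + m) %% n)%N.
Proof.
elim: m => [|m IH] /=; first by rewrite addn0 modn_small.
by rewrite IH addnS -addn1 modnDml addn1.
Qed.

Lemma tour_exists (n : nat) : (0 < n)%N -> exists s : {perm 'I_n}, is_tour s.
Proof.
move=> n0; exists (perm (@ordS_inj n)) => x; apply/setP => y; rewrite inE.
apply/porbitP; exists (y + (n - x))%N; apply: val_inj.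
have -> : (perm (@ordS_inj n) ^+ (y + (n - x)))%g x = iter (y + (n - x)) (@ordS n) x.
  rewrite permX; elim: (y + (n - x))%N => //= m ->; by rewrite permE.
rewrite iter_ordS addnC -addnA subnK; last exact: ltnW.
by rewrite -modnDmr modnn addn0 modn_small.
Qed.
Lemma arith1 (R : realFieldType) (t k a u1 u2 y1 y2 : R) :
  0 < k -> 1 <= t * (k + 1) -> u2 < y2 -> y2 = a - k * y1 -> u2 = a - k * u1 ->
  t * u2 + (1 - t) * u1 <= t * y2 + (1 - t) * y1.
Proof.
move=> hk ht hu e1 e2.
have hD : 0 < u1 - y1.
  have : 0 < k * (u1 - y1) by lra.
  by rewrite pmulr_rgt0.
have ht2 : 0 <= t * (k + 1) - 1 by rewrite subr_ge0.
have := mulr_ge0 (ltW hD) ht2.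
rewrite e1 e2; nra.
Qed.

Lemma arith2 (R : realFieldType) (t k a b1 b2 c1 c2 y1 y2 : R) :
  0 < k -> 0 < t -> t < 1 -> t * (k + 1) < 1 ->
  b1 <= c1 -> b2 <= c2 -> c2 <= y2 -> t * c2 + (1 - t) * c1 <= t * y2 + (1 - t) * y1 ->
  b2 = a - k * b1 -> y2 = a - k * y1 -> c1 = y1 /\ c2 = y2.
Proof.
move=> hk t0 t1 htk l1 l2 l3 l4 e1 e2.
have hD : 0 <= b1 - y1.
  have : 0 <= k * (b1 - y1) by lra.
  by rewrite pmulr_rge0.
have h5 : (b1 - y1) * (1 - t * (k + 1)) <= 0.
  have h6 : t * b2 + (1 - t) * b1 <= t * c2 + (1 - t) * c1 by nra.
  have h7 : t * b2 + (1 - t) * b1 <= t * y2 + (1 - t) * y1 by lra.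
  rewrite e1 e2 in h7; nra.
have h8 : 0 < 1 - t * (k + 1) by rewrite subr_gt0.
have hD0 : b1 - y1 = 0 by nra.
have eb1 : b1 = y1 by lra.
have eb2 : b2 = y2 by rewrite e1 e2 eb1.
have ec2 : c2 = y2 by lra.
split=> //; nra.
Qed.

Lemma hat_inj {R : realFieldType} (t x1 x2 y1 y2 : R) : t < 1 ->
  (t * x2 + (1 - t) * x1, x2) = (t * y2 + (1 - t) * y1, y2) -> (x1, x2) = (y1, y2).
Proof.
move=> t1 [e1 e2]; congr pair => //; rewrite e2 in e1.
have h : (1 - t) * (x1 - y1) = 0 by lra.
move/eqP: h; rewrite mulf_eq0 subr_eq0 => /orP[/eqP h|/eqP //]; lra.
Qed.

Lemma hat_le {R : realFieldType} (t x1 x2 y1 y2 : R) : 0 < t -> t < 1 ->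
  x1 <= y1 -> x2 <= y2 -> t * x2 + (1 - t) * x1 <= t * y2 + (1 - t) * y1.
Proof. move=> *; nra. Qed.

Lemma reduced_pareto (R : realFieldType) n (d1 d2 : 'I_n -> 'I_n -> R) theta y :
  0 < theta -> theta < 1 -> reduced_pareto21 d1 d2 theta y -> pareto_set d1 d2 y.
Proof.
move=> t0 t1 [s [[ts Hs] <-]]; split; first by exists s.
case=> ys [[u [tu <-]] [ne [l1 l2]]]; apply: Hs; exists u; split=> //.
move: ne l1 l2; rewrite /pareto_le /Dhat21 /Dvec /= => ne l1 l2.
split; first by move=> h; apply: ne; exact: (@hat_inj _ _ _ _ _ _ t1 h).
by split=> //; apply: (@hat_le _ _ _ _ _ _ t0 t1).
Qed.

Theorem theorem3 (R : realFieldType) (n : nat) (hn : (2 <= n)%N)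
  (d1 d2 : 'I_n -> 'I_n -> R)
  (hd1 : forall i j : 'I_n, i != j -> 0 < d1 i j)
  (hd2 : forall i j : 'I_n, i != j -> 0 < d2 i j)
  (a k : R) (ha : 0 < a) (hk : 0 < k)
  (hP : forall y : R * R, pareto_set d1 d2 y <->
          (y.2 = a - k * y.1 /\ outcomes1 d1 d2 y.1 /\ outcomes2 d1 d2 y.2))
  (theta : R) (htheta0 : 0 < theta) (htheta1 : theta < 1) :
  (1 / (k + 1) <= theta ->
     exists y0 : R * R, forall y, reduced_pareto21 d1 d2 theta y <-> y = y0) /\
  (theta < 1 / (k + 1) ->
     forall y, reduced_pareto21 d1 d2 theta y <-> pareto_set d1 d2 y).
Proof.
have k1 : 0 < k + 1 by lra.
split=> [ht|ht y].
  have {}ht : 1 <= theta * (k + 1) by rewrite -ler_pdivrMr.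
  have [s0 ts0] := @tour_exists n (ltnW hn).
  have [smin tsmin Hmin] := @argmin_ex _ _ (@is_tourb n) (tour_weight d2) _
     (proj1 (is_tourP _ _) ts0).
  have {}tsmin := proj2 (is_tourP _ _) tsmin.
  have {}Hmin : forall t, is_tour t -> tour_weight d2 smin <= tour_weight d2 t.
    by move=> t tt; apply: Hmin; exact: (proj1 (is_tourP _ _) tt).
  have [s2 [ts2 [P2 [_ l2]]]] := @pareto_below _ _ d1 d2 _ tsmin.
  have Hmin2 : forall t, is_tour t -> tour_weight d2 s2 <= tour_weight d2 t.
    by move=> t tt; apply: le_trans l2 (Hmin t tt).
  exists (Dvec d1 d2 s2) => y; split.
  - move=> Hy; have Py := @reduced_pareto _ _ d1 d2 theta y htheta0 htheta1 Hy.
    case: Hy => s [[ts Hs] Ey].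
    have [ly _] := proj1 (hP y) Py.
    have [ly0 _] := proj1 (hP _) P2.
    rewrite -Ey /Dvec /= in ly *; rewrite /Dvec /= in ly0.
    have le2 := Hmin2 s ts.
    case: (ltrgtP (tour_weight d2 s2) (tour_weight d2 s)) => [lt|gt|eq].
    + exfalso; apply: Hs; exists s2; split=> //; rewrite /pareto_le /Dhat21 /=.
      split; first by case=> _ e; move: lt; rewrite e ltxx.
      split; last exact: ltW.
      exact: (@arith1 _ _ _ _ _ _ _ _ hk ht lt ly ly0).
    + by move: gt; rewrite ltNge le2.
    + congr pair => //.
      have : k * (tour_weight d1 s2 - tour_weight d1 s) = 0 by lra.
      move/eqP; rewrite mulf_eq0 (gt_eqF hk) subr_eq0 /= => /eqP ->//.
  - move=> ->; exists s2; split => //; split=> //.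
    case=> t [tt [ne [l1' l2']]]; move: ne l1' l2'.
    rewrite /Dhat21 /= => ne l1' l2'.
    have e2 : tour_weight d2 t = tour_weight d2 s2.
      by apply/eqP; rewrite eq_le l2' Hmin2.
    rewrite e2 in ne l1'.
    have l1'' : tour_weight d1 t <= tour_weight d1 s2 by nra.
    case: P2 => _; apply; exists (Dvec d1 d2 t); split; first by exists t.
    rewrite /pareto_le /Dvec /= e2; split=> //.
    by case=> e1; apply: ne; rewrite e1.
have {}ht : theta * (k + 1) < 1 by rewrite -ltr_pdivlMr.
split; first exact: (@reduced_pareto _ _ d1 d2 theta y htheta0 htheta1).
move=> Py; have [[s [ts Es]] _] := Py.
exists s; split=> //; split=> //.
case=> t [tt [ne [l1 l2]]].
have [u [tu [Pu [lu1 lu2]]]] := @pareto_below _ _ d1 d2 _ tt.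
have [ly _] := proj1 (hP y) Py.
have [lu _] := proj1 (hP _) Pu.
rewrite -Es /Dvec /= in ly; rewrite /Dvec /= in lu.
move: ne l1 l2; rewrite /Dhat21 /= => ne l1 l2.
have [e1 e2] := @arith2 _ _ _ _ _ _ _ _ _ _ hk htheta0 htheta1 ht lu1 lu2 l2 l1 lu ly.
by apply: ne; rewrite e1 e2.
Qed.
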